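(* Let $T$ be a tree, $A\in\mathcal R(T)$, and let $T_1,\dots,T_c$ be mutually independent subtrees of $T$. (1) If $\mathrm{nullity}(A)>P(T\setminus(T_1\cup\dots\cup T_c))$, then at least one of $A[T_1],\dots,A[T_c]$ is singular. (2) If $\lambda\in\sigma(A)$ with $\mathrm{mult}(\lambda,A)>P(T\setminus(T_1\cup\dots\cup T_c))$, then $\lambda$ is an eigenvalue of at least one of $A[T_1],\dots,A[T_c]$.
   Context: $\mathcal R(T)$ is the set of real matrices indexed by $V(T)$ with $a_{ij}\ne0$ iff $\{i,j\}\in E(T)$ for $i\ne j$, and $a_{ij}a_{ji}>0$ on every edge; diagonal arbitrary. $A[T_i]$ is the principal submatrix on $V(T_i)$. Subtrees $T_1,T_2$ are independent if no edge of $T$ joins them. A path cover of $G$ is a set of vertex-disjoint induced paths covering $V(G)$; $P(G)$ is the minimum size of a path cover. $\mathrm{mult}(\lambda,A)$ is the algebraic multiplicity of $\lambda$ (matrices in $\mathcal R(T)$ are diagonally similar to real symmetric matrices). *)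

(* Defs.v *)
From HB Require Import structures.
From mathcomp Require Import all_boot all_order all_algebra.
From mathcomp Require Import boolp reals.
Set Implicit Arguments. Unset Strict Implicit. Unset Printing Implicit Defensive.
Import Order.TTheory GRing.Theory Num.Theory.
Local Open Scope ring_scope.

Definition simple_graph (n : nat) (e : rel 'I_n) : Prop :=
  irreflexive e /\ symmetric e.

Definition induced (n : nat) (e : rel 'I_n) (S : {set 'I_n}) : rel 'I_n :=
  [rel x y | [&& x \in S, y \in S & e x y]].

Definition nedges (n : nat) (e : rel 'I_n) : nat :=
  #|[set p : 'I_n * 'I_n | e p.1 p.2]|./2.

Definition is_tree (n : nat) (e : rel 'I_n) : Prop :=
  simple_graph e /\ (0 < n)%N /\ (forall x y, connect e x y) /\
  nedges e = n.-1.

Definition is_subtree (n : nat) (e : rel 'I_n) (S : {set 'I_n}) : Prop :=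
  S != set0 /\ {in S &, forall x y, connect (induced e S) x y}.

Definition mutually_independent (n c : nat) (e : rel 'I_n)
  (Ts : 'I_c -> {set 'I_n}) : Prop :=
  forall i j : 'I_c, i != j ->
    [disjoint Ts i & Ts j] /\
    (forall x y, x \in Ts i -> y \in Ts j -> ~~ e x y).

Definition induced_path (n : nat) (e : rel 'I_n) (S : {set 'I_n}) : Prop :=
  exists s : seq 'I_n, [/\ s != [::], uniq s, S = [set x in s] &
    forall (x0 : 'I_n) (a b : nat), (a < size s)%N -> (b < size s)%N ->
      e (nth x0 s a) (nth x0 s b) = ((a == b.+1) || (b == a.+1))].

Definition path_cover (n : nat) (e : rel 'I_n) (W : {set 'I_n})
  (C : {set {set 'I_n}}) : Prop :=
  partition C W /\ forall S, S \in C -> induced_path e S.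

(* P(G[W]): minimum size of a path cover (the singleton cover has size
   #|W| <= n, so starting the min at n is harmless) *)
Definition path_cover_number (n : nat) (e : rel 'I_n) (W : {set 'I_n}) : nat :=
  \big[minn/n]_(C : {set {set 'I_n}} | `[< path_cover e W C >]) #|C|.

Definition in_RT (R : realType) (n : nat) (e : rel 'I_n) (A : 'M[R]_n) : Prop :=
  forall i j : 'I_n, i != j ->
    (A i j != 0 <-> e i j) /\ (e i j -> 0 < A i j * A j i).

Definition psubmx (R : realType) (n : nat) (A : 'M[R]_n) (S : {set 'I_n})
  : 'M[R]_#|S| :=
  \matrix_(i, j) A (enum_val i) (enum_val j).

Definition nullity (R : realType) (n : nat) (A : 'M[R]_n) : nat := (n - \rank A)%N.

Definition alg_mult (R : realType) (n : nat) (A : 'M[R]_n) (lam : R) : nat :=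
  mup lam (char_poly A).

(* Main.v *)
Require Import Defs.
From HB Require Import structures.
From mathcomp Require Import all_boot all_order all_algebra.
From mathcomp Require Import boolp reals.
From mathcomp Require Import ring lra zify.
Set Implicit Arguments. Unset Strict Implicit. Unset Printing Implicit Defensive.
Import Order.TTheory GRing.Theory Num.Theory.
Local Open Scope ring_scope.

Section Core.
Variables (R : fieldType) (n : nat) (e : rel 'I_n).
Hypothesis e_irr : irreflexive e.
Hypothesis e_sym : symmetric e.
Hypothesis forest : forall X : {set 'I_n}, X != set0 ->
  exists2 l, l \in X & (#|[set y in X | e l y]| <= 1)%N.

Lemma sum_only (F : 'I_n -> R) (U : {set 'I_n}) a : a \in U ->
  (forall u, u \in U -> u != a -> F u = 0) -> \sum_(u in U) F u = F a.
Proof.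
move=> aU H; rewrite (big_setD1 a) //= big1 ?addr0 // => u /setD1P [ua uU].
exact: H.
Qed.

Lemma sum_two (F : 'I_n -> R) (U : {set 'I_n}) a b : a \in U -> b \in U -> a != b ->
  (forall u, u \in U -> u != a -> u != b -> F u = 0) -> \sum_(u in U) F u = F a + F b.
Proof.
move=> aU bU ab H; rewrite (big_setD1 a) //= (big_setD1 b) /=; last first.
  by rewrite in_setD1 eq_sym ab.
rewrite big1 ?addr0 // => u; rewrite !in_setD1 => /andP [ub /andP [ua uU]].
exact: H.
Qed.

Lemma core (k : nat) : forall (U : {set 'I_n}), (#|U| <= k)%N ->
  forall (B : 'I_n -> 'I_n -> R) (Tset : {set 'I_n}) (nxt : 'I_n -> option 'I_n)
    (rho : 'I_n -> nat) (v : 'I_n -> R),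
  Tset \subset U ->
  (forall r u, r \in U -> u \in U -> r != u -> ~~ e r u -> B r u = 0) ->
  (forall r u, r \in U -> u \in U -> e r u -> B r u != 0) ->
  (forall w : 'I_n -> R, (forall r, r \in Tset -> \sum_(u in Tset) B r u * w u = 0) ->
     forall u, u \in Tset -> w u = 0) ->
  (forall x y, x \in U :\: Tset -> nxt x = Some y ->
     [/\ y \in U :\: Tset, e x y & (rho x < rho y)%N]) ->
  (forall x x' y, x \in U :\: Tset -> x' \in U :\: Tset -> nxt x = Some y -> nxt x' = Some y -> x = x') ->
  (forall x, x \in U :\: Tset -> (forall x', x' \in U :\: Tset -> nxt x' != Some x) -> v x = 0) ->
  (forall r, r \in U -> ~~ ((r \in U :\: Tset) && (nxt r == None)) ->
     \sum_(u in U) B r u * v u = 0) ->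
  forall u, u \in U -> v u = 0.
Proof.
elim: k => [|k IH] U hU B Tset nxt rho v HTU Hz Hnz Hinj Hnxt Hinjn Hst Heq.
  by move=> u; rewrite (card0_eq (eqP _)) // -leqn0.
case: (set_0Vmem U) => [-> u|[u0 u0U]]; first by rewrite inE.
have [l lU lleaf] : exists2 l, l \in U & (#|[set y in U | e l y]| <= 1)%N.
  by apply: forest; apply/set0Pn; exists u0.
have leafP : forall y y', y \in U -> y' \in U -> e l y -> e l y' -> y = y'.
  move=> y y' yU y'U ly ly'; move/card_le1_eqP: lleaf; apply; by rewrite inE ?yU ?y'U.
have nonnb : forall u, u \in U -> u != l -> ~~ e l u -> B l u = 0 /\ B u l = 0.
  move=> u uU ul nlu; split; first by apply: Hz => //; rewrite eq_sym.
  by apply: Hz => //; rewrite e_sym.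
have cardU' : (#|U :\ l| <= k)%N by move: hU; rewrite (cardsD1 l) lU.
have FactX : forall (S : {set 'I_n}) r (f : 'I_n -> R), S \subset U :\ l -> r \in S ->
    B r l * (\sum_(u in S) B l u * f u) = B r l * (B l r * f r).
  move=> S r f SU rS; have /setD1P [rl rU] := subsetP SU r rS.
  case: (boolP (e l r)) => [elr|nelr]; last by rewrite (nonnb r rU rl nelr).2 !mul0r.
  congr (_ * _); apply: sum_only => // u uS ur.
  have /setD1P [ul uU] := subsetP SU u uS.
  case: (boolP (e l u)) => [elu|nelu].
    by rewrite (leafP u r uU rU elu elr) eqxx in ur.
  by rewrite (nonnb u uU ul nelu).1 mul0r.
have subU' : forall x, x \in U :\ l -> x \in U by move=> x /setD1P [].
case: (boolP (l \in Tset)) => lT.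
  case: (eqVneq (B l l) 0) => [Bll0|Bll].
    have [p pT elp] : exists2 p, p \in Tset & e l p.
      case: (boolP [exists p in Tset, e l p]) => [/exists_inP [p pT elp]|/exists_inPn nE].
        by exists p.
      pose w := fun u : 'I_n => if u == l then (1 : R) else 0.
      suff H : w l = 0 by exfalso; move: H; rewrite /w eqxx; apply/eqP; exact: oner_neq0.
      apply: (Hinj w _ l lT) => r rT.
      rewrite (sum_only (a := l) lT) ?/w ?eqxx ?mulr1; last first.
        by move=> u _ ul; rewrite /w (negPf ul) mulr0.
      case: (eqVneq r l) => [->//|rl].
      by apply: (nonnb r (subsetP HTU r rT) rl (nE r rT)).2.
    have pU := subsetP HTU p pT.
    have pl : p != l by apply: contraTneq elp => ->; rewrite e_irr.
    have nbl : forall u, u \in U -> u != l -> u != p -> B l u = 0 /\ B u l = 0.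
      move=> u uU ul up; apply: nonnb => //; apply: contra up => elu.
      by rewrite (leafP u p uU pU elu elp).
    have lnE : ~~ ((l \in U :\: Tset) && (nxt l == None)) by rewrite in_setD lT.
    have vp : v p = 0.
      have El := Heq l lU lnE.
      have lp : l != p by rewrite eq_sym.
      rewrite (sum_two lU pU lp) ?Bll0 ?mul0r ?add0r in El; last first.
        by move=> u uU ul up; rewrite (nbl u uU ul up).1 mul0r.
      by move/eqP: El; rewrite mulf_eq0 (negPf (Hnz l p lU pU elp)) => /eqP.
    have sub2 : forall x, x \in U :\ l :\ p -> [/\ x \in U, x != l & x != p].
      by move=> x; rewrite !in_setD1 => /and3P [-> -> ->].
    have sub2' : forall x, x \in Tset :\ l :\ p -> [/\ x \in Tset, x != l & x != p].
      by move=> x; rewrite !in_setD1 => /and3P [-> -> ->].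
    have card2 : (#|U :\ l :\ p| <= k)%N.
      by apply: leq_trans cardU'; apply: subset_leq_card; apply: subD1set.
    have eW : (U :\ l :\ p) :\: (Tset :\ l :\ p) = U :\: Tset.
      apply/setP => x; rewrite !inE; case: (eqVneq x l) => [->|xl] /=.
        by rewrite lT !andbF.
      case: (eqVneq x p) => [->|xp] /=; by rewrite ?pT ?andbF.
    have vU2 : forall u, u \in U :\ l :\ p -> v u = 0.
      apply: (IH (U :\ l :\ p) card2 B (Tset :\ l :\ p) nxt rho v); rewrite ?eW.
      - by apply: setSD; apply: setSD.
      - move=> r u /sub2 [rU _ _] /sub2 [uU _ _]; exact: Hz.
      - move=> r u /sub2 [rU _ _] /sub2 [uU _ _]; exact: Hnz.
      - move=> w Hw.
        pose w' := fun u => if u == l then - (\sum_(u in Tset :\ l :\ p) B p u * w u) / B p l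
                            else if u == p then 0 else w u.
        have Hw' : forall u, u \in Tset -> w' u = 0.
          apply: Hinj => r rT.
          rewrite (big_setD1 l lT) /= (big_setD1 p) /=; last by rewrite in_setD1 pl.
          have -> : \sum_(u in Tset :\ l :\ p) B r u * w' u = \sum_(u in Tset :\ l :\ p) B r u * w u.
            by apply: eq_bigr => u /sub2' [_ ul up]; rewrite /w' (negPf ul) (negPf up).
          rewrite {2}/w' (negPf pl) eqxx mulr0 add0r {1}/w' eqxx.
          have Bpl := Hnz p l pU lU ltac:(by rewrite e_sym).
          case: (eqVneq r l) => [->|rl].
            rewrite Bll0 mul0r add0r big1 // => u /sub2' [uT ul up].
            by rewrite (nbl u (subsetP HTU u uT) ul up).1 mul0r.
          case: (eqVneq r p) => [->|rp]; first by field.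
          have rT2 : r \in Tset :\ l :\ p by rewrite !in_setD1 rp rl.
          by rewrite (nbl r (subsetP HTU r rT) rl rp).2 mul0r add0r Hw.
        move=> u /sub2' [uT ul up]; by have := Hw' u uT; rewrite /w' (negPf ul) (negPf up).
      - exact: Hnxt.
      - exact: Hinjn.
      - exact: Hst.
      - move=> r r2 nend; have [rU rl rp] := sub2 r r2.
        have := Heq r rU nend.
        rewrite (big_setD1 l lU) /= (big_setD1 p) /=; last by rewrite in_setD1 pl.
        by rewrite vp mulr0 (nbl r rU rl rp).2 mul0r !add0r.
    move=> u uU; case: (eqVneq u l) => [->|ul]; last first.
      case: (eqVneq u p) => [->//|up]; apply: vU2; by rewrite !in_setD1 up ul.
    have Ep := Heq p pU ltac:(by rewrite in_setD pT).
    rewrite (big_setD1 l lU) /= (big_setD1 p) /= in Ep; last by rewrite in_setD1 pl.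
    rewrite vp mulr0 add0r big1 ?addr0 in Ep; last by move=> x x2; rewrite vU2 // mulr0.
    have Bpl : B p l != 0 by apply: Hnz => //; rewrite e_sym.
    by move/eqP: Ep; rewrite mulf_eq0 (negPf Bpl) => /eqP.
  pose B' := fun r u => if r == u then B r r - B r l * B l r / B l l else B r u.
  have B'off : forall r u, r != u -> B' r u = B r u by move=> r u /negPf ru; rewrite /B' ru.
  have FactY : forall (S : {set 'I_n}) r (f : 'I_n -> R), r \in S ->
      \sum_(u in S) B' r u * f u = \sum_(u in S) B r u * f u - B r l * B l r / B l l * f r.
    move=> S r f rS; rewrite !(big_setD1 r rS) /= /B' eqxx.
    rewrite (eq_bigr (fun u => B r u * f u)); last first.
      by move=> u /setD1P [ur _]; rewrite eq_sym (negPf ur).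
    ring.
  have eW : (U :\ l) :\: (Tset :\ l) = U :\: Tset.
    apply/setP => x; rewrite !inE; case: eqP => [->|] /=; by rewrite ?lT ?andbF.
  have vU' : forall u, u \in U :\ l -> v u = 0.
    apply: (IH (U :\ l) cardU' B' (Tset :\ l) nxt rho v); rewrite ?eW.
    - exact: setSD.
    - move=> r u rU uU ru nru; rewrite B'off //; exact: Hz (subU' r rU) (subU' u uU) ru nru.
    - move=> r u rU uU eru; rewrite B'off ?Hnz ?subU' //.
      by apply: contraTneq eru => ->; rewrite e_irr.
    - move=> w Hw.
      pose w' := fun u => if u == l then - (\sum_(u in Tset :\ l) B l u * w u) / B l l else w u.
      have Hw' : forall u, u \in Tset -> w' u = 0.
        apply: Hinj => r rT; rewrite (big_setD1 l lT) /= {1}/w' eqxx.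
        have -> : \sum_(u in Tset :\ l) B r u * w' u = \sum_(u in Tset :\ l) B r u * w u.
          by apply: eq_bigr => u /setD1P [ul _]; rewrite /w' (negPf ul).
        case: (eqVneq r l) => [->|rl]; first by field.
        have rT' : r \in Tset :\ l by rewrite in_setD1 rl.
        have := Hw r rT'; rewrite FactY // => H.
        have HX := FactX (Tset :\ l) r w (setSD _ HTU) rT'.
        move: H HX; set Sr := \sum_(u in _) B r u * w u; set Sl := \sum_(u in _) _.
        move=> H HX.
        have -> : Sr = B r l * B l r / B l l * w r by apply/eqP; rewrite -subr_eq0 H.
        have -> : B r l * (- Sl / B l l) = - (B r l * Sl) / B l l by field.
        by rewrite HX; field.
      move=> u /setD1P [ul uT]; by have := Hw' u uT; rewrite /w' (negPf ul).
    - exact: Hnxt.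
    - exact: Hinjn.
    - exact: Hst.
    - move=> r /setD1P [rl rU] nend; rewrite FactY ?in_setD1 ?rl //.
      have Er := Heq r rU nend.
      have El := Heq l lU (ltac:(by rewrite in_setD lT)).
      rewrite (big_setD1 l lU) /= in Er; rewrite (big_setD1 l lU) /= in El.
      have HX := FactX (U :\ l) r v (subxx _) (ltac:(by rewrite in_setD1 rl)).
      move: Er El HX.
      set Sr := \sum_(u in U :\ l) B r u * v u; set Sl := \sum_(u in U :\ l) B l u * v u.
      move=> Er El HX.
      have vl : v l = - Sl / B l l.
        have h1 : B l l * v l = - Sl by apply/eqP; rewrite -addr_eq0 El.
        by rewrite -h1; field.
      have h2 : B r l * v l = - Sr by apply/eqP; rewrite -addr_eq0 Er.
      have -> : Sr = - (B r l * v l) by rewrite h2 opprK.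
      by rewrite vl mulNr mulrN opprK mulrA HX; field.
  move=> u uU; case: (eqVneq u l) => [->|ul]; last by apply: vU'; rewrite in_setD1 ul.
  have El := Heq l lU (ltac:(by rewrite in_setD lT)).
  rewrite (big_setD1 l lU) /= big1 ?addr0 in El; last first.
    by move=> x xU'; rewrite vU' // mulr0.
  by move/eqP: El; rewrite mulf_eq0 (negPf Bll) => /eqP.
have lW : l \in U :\: Tset by rewrite in_setD lT.
have TU' : Tset \subset U :\ l.
  apply/subsetP => x xT; rewrite in_setD1 (subsetP HTU x xT) andbT.
  by apply: contraTneq xT => ->.
have eW' : forall x, x != l -> (x \in (U :\ l) :\: Tset) = (x \in U :\: Tset).
  by move=> x xl; rewrite !inE xl.
have sW' : forall x, x \in (U :\ l) :\: Tset -> x \in U :\: Tset /\ x != l.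
  by move=> x; rewrite !inE => /and3P [-> -> ->].
have nbl : forall u q, u \in U -> q \in U -> e l q -> u != l -> u != q -> B l u = 0 /\ B u l = 0.
  move=> u q uU qU elq ul uq; apply: nonnb => //; apply: contra uq => elu.
  by rewrite (leafP u q uU qU elu elq).
case: (boolP [exists q in U :\: Tset, nxt q == Some l]) => [/exists_inP [q qW /eqP nq]|/exists_inPn nop].
  have [qW' elq' _] := Hnxt q l qW nq.
  have qU : q \in U by move: qW; rewrite in_setD => /andP [].
  have elq : e l q by rewrite e_sym.
  have ql : q != l by apply: contraTneq elq => ->; rewrite e_irr.
  have nl : nxt l = None.
    case E: (nxt l) => [y|] //; have [yW ely rly] := Hnxt l y lW E.
    have yU : y \in U by move: yW; rewrite in_setD => /andP [].
    have yq := leafP y q yU qU ely elq; subst y.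
    have [_ _ rql] := Hnxt q l qW nq.
    by move: (ltn_trans rly rql); rewrite ltnn.
  pose nxt' := fun x => if x == q then None else nxt x.
  have nxt'P : forall x y, nxt' x = Some y -> nxt x = Some y /\ x != q.
    move=> x y; rewrite /nxt'; case: eqP => [_ //|/eqP xq nx]; by split.
  have vU' : forall u, u \in U :\ l -> v u = 0.
    apply: (IH (U :\ l) cardU' B Tset nxt' rho v) => //.
    - move=> r u rU uU; exact: Hz (subU' r rU) (subU' u uU).
    - move=> r u rU uU; exact: Hnz (subU' r rU) (subU' u uU).
    - move=> x y /sW' [xW xl] /nxt'P [nx xq].
      have [yW exy rxy] := Hnxt x y xW nx; split => //.
      rewrite eW' //; apply: contraTneq xl => yl; subst y.
      by rewrite (Hinjn x q l xW qW nx nq) eqxx in xq.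
    - move=> x x' y /sW' [xW _] /sW' [x'W _] /nxt'P [nx _] /nxt'P [nx' _].
      exact: Hinjn xW x'W nx nx'.
    - move=> x /sW' [xW xl] nop'; apply: (Hst x xW) => x' x'W; apply/eqP => nx'.
      case: (eqVneq x' l) => [x'l|x'l]; first by subst x'; rewrite nl in nx'.
      case: (eqVneq x' q) => [x'q|x'q].
        by subst x'; move: nx'; rewrite nq => -[] xl'; rewrite xl' eqxx in xl.
      have := nop' x'; rewrite eW' // x'W /nxt' (negPf x'q) nx' eqxx.
      by move=> /(_ isT).
    - move=> r /setD1P [rl rU] nend.
      have rq : r != q.
        apply: contraNneq nend => ->; rewrite eW' // qW /nxt' eqxx.
        done.
      have nend0 : ~~ ((r \in U :\: Tset) && (nxt r == None)).
        by move: nend; rewrite eW' // /nxt' (negPf rq).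
      have := Heq r rU nend0; rewrite (big_setD1 l lU) /=.
      by rewrite (nbl r q rU qU elq rl rq).2 mul0r add0r.
  move=> u uU; case: (eqVneq u l) => [->|ul]; last by apply: vU'; rewrite in_setD1 ul.
  have Eq := Heq q qU ltac:(by rewrite qW nq).
  rewrite (big_setD1 l lU) /= big1 ?addr0 in Eq; last by move=> x x2; rewrite vU' // mulr0.
  by move/eqP: Eq; rewrite mulf_eq0 (negPf (Hnz q l qU lU elq')) => /eqP.
have vl : v l = 0.
  by apply: (Hst l lW) => x' x'W; apply: nop.
have vU' : forall u, u \in U :\ l -> v u = 0.
  apply: (IH (U :\ l) cardU' B Tset nxt rho v) => //.
  - move=> r u rU uU; exact: Hz (subU' r rU) (subU' u uU).
  - move=> r u rU uU; exact: Hnz (subU' r rU) (subU' u uU).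
  - move=> x y /sW' [xW xl] nx.
    have [yW exy rxy] := Hnxt x y xW nx; split => //.
    rewrite eW' //; apply: contraNneq (nop x xW) => yl; subst y.
    by rewrite nx.
  - move=> x x' y /sW' [xW _] /sW' [x'W _]; exact: Hinjn.
  - move=> x /sW' [xW xl] nop'.
    case: (boolP [exists x' in U :\: Tset, nxt x' == Some x]) => [/exists_inP [x' x'W /eqP nx']|/exists_inPn nop2]; last first.
      by apply: (Hst x xW) => x' x'W; apply: nop2.
    case: (eqVneq x' l) => [x'l|x'l]; last first.
      by have := nop' x'; rewrite eW' // x'W nx' eqxx => /(_ isT).
    subst x'.
    have [_ elx _] := Hnxt l x lW nx'.
    have xU : x \in U by move: xW; rewrite in_setD => /andP [].
    have lx : l != x by rewrite eq_sym.
    have El := Heq l lU ltac:(by rewrite lW nx').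
    rewrite (sum_two lU xU lx) ?vl ?mulr0 ?add0r in El; last first.
      by move=> u uU ul ux; rewrite (nbl u x uU xU elx ul ux).1 mul0r.
    by move/eqP: El; rewrite mulf_eq0 (negPf (Hnz l x lU xU elx)) => /eqP.
  - move=> r /setD1P [rl rU] nend.
    have nend0 : ~~ ((r \in U :\: Tset) && (nxt r == None)) by rewrite -eW'.
    have := Heq r rU nend0; rewrite (big_setD1 l lU) /=.
    by rewrite vl mulr0 add0r.
move=> u uU; case: (eqVneq u l) => [->//|ul]; apply: vU'; by rewrite in_setD1 ul.
Qed.
End Core.


Section Forest.
Variables (n : nat) (e : rel 'I_n).

Definition reach (X : {set 'I_n}) k :=
  iter k (fun S : {set 'I_n} => S :|: [set x | [exists y in S, e x y]]) X.

Lemma reachS (X : {set 'I_n}) k x : (x \in reach X k.+1) = (x \in reach X k) || [exists y in reach X k, e x y].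
Proof. by rewrite /reach iterS inE inE. Qed.

Lemma reach_path (X : {set 'I_n}) p x : path e x p -> last x p \in X -> x \in reach X (size p).
Proof.
elim: p x => [|y p IH] x /=; first by move=> _ ->.
move=> /andP [exy py] ly; rewrite reachS; apply/orP; right.
by apply/exists_inP; exists y => //; apply: IH.
Qed.

Lemma tree_forest : is_tree e -> forall X : {set 'I_n}, X != set0 ->
  exists2 l, l \in X & (#|[set y in X | e l y]| <= 1)%N.
Proof.
move=> [[irr sym] [n0 [conn ned]]] X /set0Pn [u0 u0X].
case: (boolP [exists x in X, #|[set y in X | e x y]| <= 1]%N) => [/exists_inP [l lX H]|/exists_inPn Hdeg].
  by exists l.
exfalso.
have Hdeg' : forall x, x \in X -> (1 < #|[set y in X | e x y]|)%N.
  by move=> x xX; rewrite ltnNge; exact: Hdeg.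
have exk : forall x, exists k, x \in reach X k.
  move=> x; have /connectP [p px lp] := conn x u0.
  by exists (size p); apply: reach_path => //; rewrite -lp.
pose dist x := ex_minn (exk x).
have distP : forall x, x \in reach X (dist x).
  by move=> x; rewrite /dist; case: ex_minnP.
have distM : forall x k, x \in reach X k -> (dist x <= k)%N.
  by move=> x k; rewrite /dist; case: ex_minnP => m _ H /H.
pose f x := odflt x [pick y | (dist y < dist x)%N && e x y].
have fP : forall x, x \notin X -> (dist (f x) < dist x)%N /\ e x (f x).
  move=> x xX; rewrite /f; case: pickP => [y /andP [h1 h2]|none] //=.
  exfalso; have dx := distP x.
  case dE: (dist x) => [|d].
    by rewrite dE in dx; move: dx xX; rewrite /reach /= => ->.
  rewrite dE reachS in dx; case/orP: dx => [dx|/exists_inP [y yd exy]].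
    by move: (distM x d dx); rewrite dE ltnn.
  by move: (none y); rewrite exy andbT dE ltnS (distM y d yd).
pose g1 x := odflt x [pick y in [set y in X | e x y]].
pose g2 x := odflt x [pick y in [set y in X | e x y] :\ g1 x].
have gP : forall x, x \in X -> [/\ g1 x \in X, e x (g1 x), g2 x \in X, e x (g2 x) & g1 x != g2 x].
  move=> x xX; have := Hdeg' x xX.
  rewrite /g2 /g1; case: pickP => [y yN|none]; last first.
    by rewrite (eq_card0 none).
  rewrite (cardsD1 y) yN => /= h; case: pickP => [z zN|none]; last first.
    by rewrite (eq_card0 none) in h.
  move: yN zN; rewrite !inE => /andP [yX exy] /and3P [zy zX exz] /=.
  by rewrite yX exy zX exz eq_sym zy.
pose h (p : 'I_n * bool) :=
  let: (x, b) := p in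
  if x \in X then (if b then (x, g1 x) else (x, g2 x))
  else (if b then (x, f x) else (f x, x)).
have fcyc : forall x x', x \notin X -> x' \notin X -> x = f x' -> f x = x' -> False.
  move=> x x' xX x'X E1 E2.
  have := (fP x xX).1; have := (fP x' x'X).1; rewrite -E1 E2 => h1 h2.
  by move: (ltn_trans h1 h2); rewrite ltnn.
have hinj : injective h.
  move=> [x b] [x' b']; rewrite /h.
  case xX: (x \in X); case x'X: (x' \in X).
  - have [_ _ _ _ g12] := gP x xX.
    case: b; case: b' => -[E1 E2]; subst x' => //; by rewrite E2 eqxx in g12.
  - have [g1X _ g2X _ _] := gP x xX.
    by case: b; case: b' => -[E1 E2];
      first [ by rewrite -E1 xX in x'X | by rewrite -E2 ?g1X ?g2X in x'X ].
  - have [g1X _ g2X _ _] := gP x' x'X.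
    by case: b; case: b' => -[E1 E2];
      first [ by rewrite E1 x'X in xX | by rewrite E2 ?g1X ?g2X in xX ].
  - case: b; case: b' => -[E1 E2].
    + by rewrite E1.
    + by case: (fcyc x x' (negbT xX) (negbT x'X)).
    + by case: (fcyc x' x (negbT x'X) (negbT xX)).
    + by rewrite E2.
have hP : forall p, h p \in [set q : 'I_n * 'I_n | e q.1 q.2].
  move=> [x b]; rewrite inE /h.
  case xX: (x \in X); case: b => /=.
  - by have [] := gP x xX.
  - by have [] := gP x xX.
  - by have [] := fP x (negbT xX).
  - by rewrite sym; have [] := fP x (negbT xX).
have : (#|[set: 'I_n * bool]| <= #|[set q : 'I_n * 'I_n | e q.1 q.2]|)%N.
  rewrite -(card_imset _ hinj); apply: subset_leq_card.
  by apply/subsetP => q /imsetP [p _ ->]; exact: hP.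
rewrite cardsT card_prod card_ord card_bool.
move: ned; rewrite /nedges; set N := #|_| => ned hN.
have hh := odd_double_half N; rewrite ned -addnn -subn1 in hh.
have : (odd N <= 1)%N by case: odd.
lia.
Qed.
End Forest.


Section Alg.
Variable F : fieldType.

Lemma char_poly_similar n (P A D : 'M[F]_n) : P \in unitmx -> P *m A = D *m P ->
  char_poly A = char_poly D.
Proof.
move=> Pu PA.
pose Pp := map_mx (@polyC F) P.
have E : Pp *m char_poly_mx A = char_poly_mx D *m Pp.
  rewrite /char_poly_mx mulmxBr mulmxBl scalar_mxC -!map_mxM PA.
  by [].
have nz : (\det P)%:P != 0 :> {poly F}.
  by rewrite polyC_eq0 -unitfE -unitmxE.
have := congr1 determinant E; rewrite !det_mulmx /Pp det_map_mx /= [RHS]mulrC.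
by move=> h; apply: (mulfI nz); exact: h.
Qed.

Lemma char_poly_scalar k (lam : F) : char_poly (lam%:M : 'M[F]_k) = ('X - lam%:P) ^+ k.
Proof.
rewrite char_poly_trig ?scalar_mx_is_trig //.
rewrite (eq_bigr (fun _ => 'X - lam%:P)); last by move=> i _; rewrite mxE eqxx.
by rewrite prodr_const card_ord.
Qed.

Lemma mup_le_aux k r (A : 'M[F]_(k + r)) lam :
  let M := A - lam%:M in
  (kermx M :&: M)%MS = 0 -> \rank (kermx M) = k -> (mup lam (char_poly A) <= k)%N.
Proof.
move=> M cap0 hk.
have hr : \rank M = r.
  by move: hk; rewrite mxrank_ker => /eqP; rewrite -(eqn_add2r (\rank M)) subnK ?rank_leq_row // eqn_add2l => /eqP.
pose K := castmx (hk, erefl (k + r)%N) (row_base (kermx M)).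
pose Rb := castmx (hr, erefl (k + r)%N) (row_base M).
have eK : (K :=: kermx M)%MS by rewrite /K; apply: eqmx_trans (eqmx_cast _ _) (eq_row_base _).
have eR : (Rb :=: M)%MS by rewrite /Rb; apply: eqmx_trans (eqmx_cast _ _) (eq_row_base _).
have rK : \rank K = k by rewrite eK.
have rR : \rank Rb = r by rewrite eR.
pose P := col_mx K Rb.
have Pu : P \in unitmx.
  rewrite -row_free_unit /row_free -addsmxE mxrank_disjoint_sum.
    by rewrite rK rR.
  by apply/eqP; rewrite -submx0 (cap_eqmx eK eR) cap0 sub0mx.
have KA : K *m A = lam *: K.
  have : K *m M = 0 by apply/sub_kermxP; rewrite eK.
  by rewrite /M mulmxBr mul_mx_scalar => /eqP; rewrite subr_eq0 => /eqP.
have [C0 RC] : exists C0 : 'M_r, Rb *m M = C0 *m Rb.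
  by apply/submxP; rewrite eR submxMl.
have RA : Rb *m A = (C0 + lam%:M) *m Rb.
  have -> : A = M + lam%:M by rewrite /M subrK.
  by rewrite mulmxDr RC mulmxDl mul_mx_scalar mul_scalar_mx.
pose D := block_mx (lam%:M : 'M_k) 0 0 (C0 + lam%:M).
have PA : P *m A = D *m P.
  by rewrite /P /D mul_col_mx mul_block_col !mul0mx addr0 add0r KA RA mul_scalar_mx.
rewrite (char_poly_similar Pu PA) /char_poly /D char_block_diag_mx det_ublock.
rewrite -/(char_poly _) -/(char_poly _) char_poly_scalar mupMl ?mup_XsubCX ?eqxx //.
rewrite -eigenvalue_root_char /eigenvalue /eigenspace addrK.
rewrite negbK.
have Rfree : row_free Rb by rewrite /row_free rR.
apply/eqP; apply/row_matrixP => i; rewrite row0.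
set y := row i _.
have yC : y *m C0 = 0 by apply/sub_kermxP; exact: row_sub.
have : (y *m Rb <= kermx M :&: M)%MS.
  rewrite sub_capmx; apply/andP; split.
    by apply/sub_kermxP; rewrite -mulmxA RC mulmxA yC mul0mx.
  by rewrite -eR submxMl.
rewrite cap0 submx0 mulmx_free_eq0 //.
by move/eqP.
Qed.

Lemma castsq m n (e : m = n) (A : 'M[F]_n) lam :
  let A' := castmx (esym e, esym e) A in
  [/\ char_poly A' = char_poly A,
       \rank (kermx (A' - lam%:M)) = \rank (kermx (A - lam%:M)) &
       (kermx (A - lam%:M) :&: (A - lam%:M))%MS = 0 ->
       (kermx (A' - lam%:M) :&: (A' - lam%:M))%MS = 0].
Proof. by case: n / e A => A; rewrite /= castmx_id. Qed.

Lemma mup_le n (A : 'M[F]_n) lam :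
  (kermx (A - lam%:M) :&: (A - lam%:M))%MS = 0 ->
  (mup lam (char_poly A) <= \rank (kermx (A - lam%:M)))%N.
Proof.
move=> cap0.
have e : addn (\rank (kermx (A - lam%:M))) (\rank (A - lam%:M)) = n.
  by rewrite mxrank_ker subnK // rank_leq_row.
have [c1 c2 c3] := castsq e A lam.
rewrite -c1; apply: mup_le_aux; [exact: c3 | exact: c2].
Qed.

End Alg.


Section Weights.
Variables (R : realFieldType) (n : nat) (e : rel 'I_n) (A : 'M[R]_n).
Hypothesis e_irr : irreflexive e.
Hypothesis e_sym : symmetric e.
Hypothesis forest : forall X : {set 'I_n}, X != set0 ->
  exists2 l, l \in X & (#|[set y in X | e l y]| <= 1)%N.
Hypothesis Apat : forall i j, i != j -> (A i j != 0) = e i j.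
Hypothesis Apos : forall i j, e i j -> 0 < A i j * A j i.

Lemma weights_aux k : forall U : {set 'I_n}, (#|U| <= k)%N ->
  exists h : 'I_n -> R, (forall i, 0 < h i) /\
    (forall i j, i \in U -> j \in U -> A i j * h j = A j i * h i).
Proof.
elim: k => [|k IH] U hU.
  exists (fun _ => 1); split => // i j; by rewrite (card0_eq (eqP _)) // -leqn0.
case: (set_0Vmem U) => [->|[u0 u0U]].
  by exists (fun _ => 1); split => // i j; rewrite inE.
have [l lU lleaf] : exists2 l, l \in U & (#|[set y in U | e l y]| <= 1)%N.
  by apply: forest; apply/set0Pn; exists u0.
have cardU' : (#|U :\ l| <= k)%N by move: hU; rewrite (cardsD1 l) lU.
have [h [hpos hrel]] := IH _ cardU'.
have leafP : forall y y', y \in U -> y' \in U -> e l y -> e l y' -> y = y'.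
  move=> y y' yU y'U ly ly'; move/card_le1_eqP: lleaf; apply; by rewrite inE ?yU ?y'U.
have zer : forall j, j != l -> ~~ e l j -> A l j = 0 /\ A j l = 0.
  move=> j jl nlj; split; apply/eqP; apply/negPn/negP => H.
    by move: H; rewrite Apat 1?eq_sym // (negPf nlj).
  by move: H; rewrite Apat // e_sym (negPf nlj).
case: (pickP [pred p | (p \in U) && e l p]) => [p /andP [pU elp]|none].
  have pl : p != l by apply: contraTneq elp => ->; rewrite e_irr.
  have Apl : A p l != 0 by rewrite Apat // e_sym.
  pose h' := fun x => if x == l then h p * A l p / A p l else h x.
  exists h'; split.
    move=> i; rewrite /h'; case: eqP => // _.
    have : 0 < A l p / A p l.
      have -> : A l p / A p l = (A l p * A p l) / (A p l * A p l) by field.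
      apply: divr_gt0; first exact: Apos.
      by rewrite lt0r mulf_neq0 //= -expr2 sqr_ge0.
    by move=> H; rewrite -mulrA mulr_gt0.
  have rel_l : forall j, j \in U -> A l j * h' j = A j l * h' l.
    move=> j jU; rewrite /h' eqxx; case: (eqVneq j l) => [->|jl]; first by [].
    case: (eqVneq j p) => [->|jp]; first by field.
    have nlj : ~~ e l j by apply: contra jp => elj; rewrite (leafP j p jU pU elj elp).
    by have [-> ->] := zer j jl nlj; rewrite !mul0r.
  move=> i j iU jU.
  case: (eqVneq i l) => [->|il]; first exact: rel_l.
  case: (eqVneq j l) => [->|jl]; first by rewrite (rel_l i iU).
  rewrite /h' (negPf il) (negPf jl); apply: hrel; by rewrite in_setD1 ?il ?jl.
exists (fun x => if x == l then 1 else h x); split.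
  by move=> i; case: eqP.
move=> i j iU jU.
have nl : forall j, j \in U -> j != l -> A l j = 0 /\ A j l = 0.
  move=> j' j'U j'l; apply: zer => //; apply/negP => elj.
  by move: (none j'); rewrite /= j'U elj.
case: (eqVneq i l) => [->|il]; case: (eqVneq j l) => [->|jl] //.
- by have [-> ->] := nl j jU jl; rewrite !mul0r.
- by have [-> ->] := nl i iU il; rewrite !mul0r.
- apply: hrel; by rewrite in_setD1 ?il ?jl.
Qed.

End Weights.

Lemma cap0_weights (R : realFieldType) n (M : 'M[R]_n) (h : 'I_n -> R) :
  (forall i, 0 < h i) -> (forall i j, M i j * h j = M j i * h i) -> (kermx M :&: M)%MS = 0.
Proof.
move=> hpos hrel; apply/row_matrixP => i; rewrite row0.
set v := row i _.
have vK : v *m M = 0 by apply/sub_kermxP; exact: submx_trans (row_sub i _) (capmxSl _ _).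
have [w vw] : exists w : 'rV_n, v = w *m M.
  by apply/submxP; exact: submx_trans (row_sub i _) (capmxSr _ _).
have E : \sum_j v 0 j * h j * v 0 j = 0.
  transitivity (\sum_j \sum_k w 0 k * (M k j * h j) * v 0 j).
    apply: eq_bigr => j _; rewrite {1}vw mxE big_distrl /= big_distrl /=.
    by apply: eq_bigr => k _; rewrite mulrA.
  rewrite exchange_big /=.
  transitivity (\sum_k w 0 k * h k * (v *m M) 0 k); last first.
    by rewrite vK big1 // => k _; rewrite mxE mulr0.
  apply: eq_bigr => k _; rewrite mxE big_distrr /=.
  by apply: eq_bigr => j _; rewrite hrel; ring.
apply/rowP => j; rewrite [RHS]mxE -[LHS]/(v 0 j).
have H0 : v 0 j * h j * v 0 j = 0.
  apply: (@psumr_eq0P _ _ predT (fun j => v 0 j * h j * v 0 j) _ E j isT).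
  move=> k _; rewrite mulrC mulrA -expr2 mulr_ge0 ?sqr_ge0 //; exact: ltW.
move/eqP: H0; rewrite mulrC mulrA mulf_eq0 => /orP [|H].
  by rewrite mulf_eq0 orbb => /eqP.
by rewrite (gt_eqF (hpos j)) in H.
Qed.


Lemma pcn_cases n (e : rel 'I_n) W :
  path_cover_number e W = n \/
  exists C, path_cover e W C /\ #|C| = path_cover_number e W.
Proof.
rewrite /path_cover_number.
apply: (big_ind (fun m => m = n \/ exists C, path_cover e W C /\ #|C| = m)).
- by left.
- move=> x y Hx Hy /=; case: (leqP x y) => h.
    by [].
  by [].
- by move=> C /asboolP HC; right; exists C.
Qed.

Lemma nullity_le (R : realType) n (e : rel 'I_n) (A : 'M[R]_n) c (Ts : 'I_c -> {set 'I_n}) :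
  is_tree e ->
  (forall i j, i != j -> (A i j != 0) = e i j) ->
  mutually_independent e Ts ->
  (forall i, \det (psubmx A (Ts i)) != 0) ->
  (nullity A <= path_cover_number e (~: \bigcup_(i < c) Ts i))%N.
Proof.
move=> tree Apat indep detnz.
have [[irr sym] _] := tree.
have forest := tree_forest tree.
set Tset := \bigcup_(i < c) Ts i.
set W := ~: Tset.
case: (pcn_cases e W) => [->|[C [[Hpart Hind] cardC]]].
  by rewrite /nullity leq_subr.
rewrite -cardC.
pose Pq := fun (S : {set 'I_n}) (s : seq 'I_n) => S \in C ->
  [/\ s != [::], uniq s, S = [set x in s] &
    forall (x0 : 'I_n) (a b : nat), (a < size s)%N -> (b < size s)%N ->
      e (nth x0 s a) (nth x0 s b) = ((a == b.+1) || (b == a.+1))].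
have Hex : forall S, exists s, Pq S s.
  move=> S; case: (boolP (S \in C)) => h; last by exists [::]; rewrite /Pq (negPf h).
  by have [s Hs] := Hind S h; exists s; rewrite /Pq.
have [sq Hsq] := choice Hex.
move/and3P: Hpart => [/eqP coverC trivC _].
pose blk x := pblock C x.
pose sx x := sq (blk x).
pose idx x := index x (sx x).
pose nxt x := if ((idx x).+1 < size (sx x))%N then Some (nth x (sx x) (idx x).+1) else None.
have blkC : forall x, x \in W -> blk x \in C.
  by move=> x xW; apply: pblock_mem; rewrite coverC.
have inblk : forall x, x \in W -> x \in blk x.
  by move=> x xW; rewrite mem_pblock coverC.
have blkW : forall x y, x \in W -> y \in blk x -> y \in W.
  move=> x y xW yb; rewrite -coverC; apply/bigcupP; exists (blk x) => //; exact: blkC.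
have blk_eq : forall x y, x \in W -> y \in blk x -> blk y = blk x.
  by move=> x y xW yb; apply: def_pblock => //; exact: blkC.
have insx : forall x y, x \in W -> (y \in sx x) = (y \in blk x).
  move=> x y xW; have [_ _ E _] := Hsq _ (blkC x xW).
  by rewrite /sx {2}E inE.
have idx_lt : forall x, x \in W -> (idx x < size (sx x))%N.
  by move=> x xW; rewrite /idx index_mem insx // inblk.
have nth_idx : forall x x0, x \in W -> nth x0 (sx x) (idx x) = x.
  move=> x x0 xW; rewrite (set_nth_default x) ?idx_lt //.
  by rewrite nth_index // insx // inblk.
set H := [set x in W | idx x == 0%N].
have cardH : (#|H| <= #|C|)%N.
  rewrite -(@card_in_imset _ _ blk H); last first.
    move=> x x' /setIdP [xW /eqP i0] /setIdP [x'W /eqP i0'] bb.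
    have sxe : sx x' = sx x by rewrite /sx bb.
    rewrite -(nth_idx x x xW) -(nth_idx x' x x'W) sxe i0.
    by move: i0'; rewrite /idx sxe => ->.
  apply: subset_leq_card; apply/subsetP => S /imsetP [x /setIdP [xW _] ->].
  exact: blkC.

have nxtP : forall x y, x \in W -> nxt x = Some y ->
    [/\ y \in W, e x y, (idx x < idx y)%N & blk y = blk x].
  move=> x y xW; rewrite /nxt; case: ifP => // lt [<-].
  have [_ us _ He] := Hsq _ (blkC x xW).
  have yb : nth x (sx x) (idx x).+1 \in blk x by rewrite -insx // mem_nth.
  have be := blk_eq x _ xW yb.
  split => //.
  - exact: blkW yb.
  - have := He x (idx x) (idx x).+1 (idx_lt x xW) lt.
    by rewrite (nth_idx x x xW) eqxx orbT.
  - by rewrite /idx /sx be -/(sx x) index_uniq.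
have key : forall y : 'rV[R]_n, y *m A = 0 -> (forall x, x \in H -> y 0 x = 0) -> y = 0.
  move=> y yA yH; apply/rowP => u; rewrite mxE.
  apply: (@core R n e irr sym forest n setT _ (fun r u => A u r) Tset nxt idx (fun u => y 0 u)).
  - by rewrite cardsT card_ord.
  - exact: subsetT.
  - move=> r u' _ _ ru nru.
    have := Apat u' r ltac:(by rewrite eq_sym); rewrite sym (negPf nru).
    by move/negbFE/eqP.
  - move=> r u' _ _ eru; rewrite Apat; first by rewrite sym.
    by apply: contraTneq eru => ->; rewrite irr.
  - move=> w Hw u0 /bigcupP [i _ u0i].
    set S := Ts i.
    pose z : 'rV[R]_#|S| := \row_j w (enum_val j).
    have Hz0 : z *m psubmx A S = 0.
      apply/rowP => j; rewrite !mxE.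
      set r := enum_val j.
      have rS : r \in S by exact: enum_valP.
      have rT : r \in Tset by apply/bigcupP; exists i.
      rewrite -[RHS](Hw r rT) (big_setID S) /= (setIidPr _); last first.
        by apply/subsetP => x xS; apply/bigcupP; exists i.
      rewrite [X in _ = _ + X]big1 ?addr0; last first.
        move=> x /setDP [/bigcupP [j' _ xj] xS].
        have ij : i != j' by apply: contraNneq xS => ij; rewrite /S ij.
        have [dis noe] := indep i j' ij.
        have xr : x != r by apply: contraNneq xS => ->.
        have := Apat x r xr; rewrite sym (negPf (noe r x rS xj)).
        by move/negbFE/eqP => ->; rewrite mul0r.
      rewrite [RHS]big_enum_val /=; apply: eq_bigr => k _.
      by rewrite !mxE mulrC.
    have unitM : psubmx A S \in unitmx by rewrite unitmxE unitfE; exact: detnz.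
    have z0 : z = 0 by rewrite -(mulmxK unitM z) Hz0 mul0mx.
    have := congr1 (fun M : 'rV[R]_#|S| => M 0 (enum_rank_in u0i u0)) z0.
    by rewrite !mxE enum_rankK_in.
  - by move=> x y1; rewrite setTD => xW nx; have [] := nxtP x y1 xW nx.
  - move=> x x' y1; rewrite setTD => xW x'W nx nx'.
    have [_ _ _ b1] := nxtP x y1 xW nx; have [_ _ _ b2] := nxtP x' y1 x'W nx'.
    have sxe : sx x' = sx x by rewrite /sx -b1 -b2.
    have [_ us _ _] := Hsq _ (blkC x xW).
    move: nx nx'; rewrite /nxt sxe.
    case: ifP => // lt [E1]; case: ifP => // lt' [E2].
    have : (idx x).+1 == (idx x').+1.
      rewrite -(nth_uniq x lt lt' us) (set_nth_default x' x lt') E1 E2 //.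
    rewrite eqSS => /eqP eqi.
    by rewrite -(nth_idx x x xW) -(nth_idx x' x x'W) sxe eqi.
  - move=> x; rewrite setTD => xW nop; apply: yH; rewrite inE xW /=.
    case E: (idx x) => [//|i]; exfalso.
    have ilt : (i < size (sx x))%N by rewrite (leq_trans _ (idx_lt x xW)) // E.
    set x' := nth x (sx x) i.
    have x'b : x' \in blk x by rewrite -insx // mem_nth.
    have x'W := blkW x x' xW x'b.
    have be := blk_eq x x' xW x'b.
    have [_ us _ _] := Hsq _ (blkC x xW).
    have ix' : idx x' = i by rewrite /idx /sx be -/(sx x) index_uniq.
    have := nop x' x'W; rewrite /nxt ix' /sx be -/(sx x) -E idx_lt //.
    by rewrite (nth_idx x x' xW) eqxx.
  - move=> r _ _; have := congr1 (fun M : 'rV[R]_n => M 0 r) yA; rewrite !mxE => E; rewrite -[RHS]E.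
    by apply: eq_big => [x|x _]; [rewrite inE | rewrite mulrC].
  - by rewrite inE.
set K := kermx A.
pose E := \matrix_(i < n, j < #|H|) ((i == enum_val j)%:R : R).
have Z : (K :&: kermx E)%MS = 0.
  apply/row_matrixP => i; rewrite row0; apply: key.
    apply/sub_kermxP; exact: submx_trans (row_sub i _) (capmxSl _ _).
  move=> x xH.
  have /sub_kermxP yE : (row i (K :&: kermx E) <= kermx E)%MS.
    exact: submx_trans (row_sub i _) (capmxSr _ _).
  have := congr1 (fun M : 'rV[R]_#|H| => M 0 (enum_rank_in xH x)) yE.
  rewrite mxE (bigD1 x) //= big1 ?addr0; last first.
    by move=> j jx; rewrite /E !mxE (enum_rankK_in xH xH) (negPf jx) mulr0.
  by rewrite /E !mxE (enum_rankK_in xH xH) eqxx mulr1.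
rewrite /nullity -mxrank_ker -/K -(mxrank_mul_ker K E) Z mxrank0 addn0.
exact: leq_trans (rank_leq_col _) cardH.
Qed.

Theorem mainTheorem9 (R : realType) (n : nat) (e : rel 'I_n) (A : 'M[R]_n)
  (c : nat) (Ts : 'I_c -> {set 'I_n}) :
  is_tree e -> in_RT e A ->
  (forall i, is_subtree e (Ts i)) -> mutually_independent e Ts ->
  let W := ~: (\bigcup_(i < c) Ts i) in
  ((path_cover_number e W < nullity A)%N ->
     exists i : 'I_c, \det (psubmx A (Ts i)) = 0) /\
  (forall lam : R, eigenvalue A lam ->
     (path_cover_number e W < alg_mult A lam)%N ->
     exists i : 'I_c, eigenvalue (psubmx A (Ts i)) lam).
Proof.
move=> tree RT _ indep W.
have [[irr sym] _] := tree.
have forest := tree_forest tree.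
have Apat : forall i j, i != j -> (A i j != 0) = e i j.
  move=> i j ij; have [h _] := RT i j ij.
  by apply/idP/idP => H; apply/h.
have Apos : forall i j, e i j -> 0 < A i j * A j i.
  move=> i j eij; have ij : i != j by apply: contraTneq eij => ->; rewrite irr.
  by have [_ h] := RT i j ij; apply: h.
split.
  move=> hlt.
  case: (boolP [exists i, \det (psubmx A (Ts i)) == 0]) => [/existsP [i /eqP h]|/existsPn H].
    by exists i.
  exfalso; have := nullity_le tree Apat indep H.
  by rewrite leqNgt hlt.
move=> lam _ hlt.
set M := A - lam%:M.
have Mpat : forall i j, i != j -> (M i j != 0) = e i j.
  move=> i j ij; rewrite /M !mxE; case: (eqVneq i j) => [eij|_]; first by rewrite eij eqxx in ij.
  by rewrite mulr0n subr0; exact: Apat.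
have [h [hpos hrel]] := @weights_aux R n e A irr sym forest Apat Apos n setT
  ltac:(by rewrite cardsT card_ord).
have Mrel : forall i j, M i j * h j = M j i * h i.
  move=> i j; rewrite /M !mxE; case: (eqVneq i j) => [->//|ij].
  rewrite !mulr0n !subr0; apply: hrel; by rewrite inE.
have cap0 := cap0_weights hpos Mrel.
have hmup := mup_le cap0.
case: (boolP [exists i, \det (psubmx M (Ts i)) == 0]) => [/existsP [i /eqP hi]|/existsPn H].
  exists i; rewrite /eigenvalue /eigenspace kermx_eq0 row_free_unit unitmxE unitfE negbK.
  have -> : psubmx A (Ts i) - lam%:M = psubmx M (Ts i).
    apply/matrixP => x y; rewrite /M !mxE (inj_eq enum_val_inj).
    by [].
  by rewrite hi.
exfalso; have := nullity_le tree Mpat indep H.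
rewrite leqNgt; apply/negP/negPn.
apply: leq_trans hlt _.
by rewrite /alg_mult /nullity -mxrank_ker -/M.
Qed.
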